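(* The language $\mathcal{L}_{AIL}$ is strictly more expressive than $\mathcal{L}_{FH}$, i.e. $\mathcal{L}_{FH}\prec\mathcal{L}_{AIL}$: (i) for every $\varphi\in\mathcal{L}_{FH}$ there is $\psi\in\mathcal{L}_{AIL}$ such that for every epistemic model with awareness $M$ and every world $w$ of $M$, $M,w\vDash_{FH}\varphi$ iff $M,w\vDash_{AIL}\psi$; and (ii) it is not the case that for every $\psi\in\mathcal{L}_{AIL}$ there is $\varphi\in\mathcal{L}_{FH}$ with $M,w\vDash_{AIL}\psi$ iff $M,w\vDash_{FH}\varphi$ for all $M,w$.
   Context: Let $\mathcal{P}$ be a countable set of atomic propositions and $\mathcal{G}$ a finite set of agents. An epistemic model with awareness is $M=\langle W,\{\sim_i,\mathscr{A}_i\}_{i\in\mathcal{G}},V\rangle$ where $W\neq\emptyset$, each $\sim_i$ is an equivalence relation on $W$, each $\mathscr{A}_i:W\to 2^{\mathcal{P}}$ satisfies $\mathscr{A}_i(w)=\mathscr{A}_i(v)$ whenever $(w,v)\in\sim_i$, and $V:\mathcal{P}\to 2^W$. The A-equivalence relation $\approx_i$ on $W$: $(w,v)\in\approx_i$ iff $\mathscr{A}_i(w)=\mathscr{A}_i(v)$ and for every $p\in\mathscr{A}_i(w)$, $w\in V(p)$ iff $v\in V(p)$. The composition $\sim_i\circ\approx_i$ is $\{(w,v):\exists t\,((w,t)\in\approx_i\text{ and }(t,v)\in\sim_i)\}$ and $R^+$ denotes the transitive closure of $R$. The language $\mathcal{L}_{AIL}$ is given by $\varphi::=p\mid\neg\varphi\mid\varphi\wedge\varphi\mid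 A_i\varphi\mid I_i\varphi\mid E_i\varphi\mid[\approx]_i\varphi\mid[\circ^+]_i\varphi$ ($p\in\mathcal{P}$, $i\in\mathcal{G}$); $\mathcal{L}_{FH}$ is the fragment without $[\approx]_i$ and $[\circ^+]_i$. Let $At(\varphi)$ be the set of atoms occurring in $\varphi$. Satisfaction $\vDash_{AIL}$: $M,w\vDash p$ iff $w\in V(p)$; Boolean clauses as usual; $M,w\vDash A_i\varphi$ iff $At(\varphi)\subseteq\mathscr{A}_i(w)$; $M,w\vDash I_i\varphi$ iff $M,v\vDash\varphi$ for all $v$ with $(w,v)\in\sim_i$; $M,w\vDash[\approx]_i\varphi$ iff $M,v\vDash\varphi$ for all $v$ with $(w,v)\in\approx_i$; $M,w\vDash[\circ^+]_i\varphi$ iff $M,v\vDash\varphi$ for all $v$ with $(w,v)\in(\sim_i\circ\approx_i)^+$; $M,w\vDash E_i\varphi$ iff $M,w\vDash A_i\varphi$ and $M,w\vDash[\circ^+]_i\varphi$. Satisfaction $\vDash_{FH}$ on $\mathcal{L}_{FH}$ is defined identically except $M,w\vDash_{FH}E_i\varphi$ iff $M,w\vDash_{FH}A_i\varphi$ and $M,w\vDash_{FH}I_i\varphi$. *)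

(* Defs.v *)
From Stdlib Require Import List Relations.
From mathcomp Require Import all_boot.
Import ListNotations.

Unset Implicit Arguments.
Unset Strict Implicit.
Unset Printing Implicit Defensive.

Definition prop_atom := nat.

Record model (G : Type) := Model {
  world : Type;
  world_inhabited : inhabited world;
  sim : G -> world -> world -> Prop;
  aw : G -> world -> prop_atom -> Prop;
  val : prop_atom -> world -> Prop;
  sim_equiv : forall i, equivalence world (sim i);
  aw_sim : forall i w v, sim i w v -> forall p, aw i w p <-> aw i v p
}.
Arguments world {G}.
Arguments sim {G}.
Arguments aw {G}.
Arguments val {G}.

Section Rel.
Variables (G : Type) (M : model G).

Definition aeq (i : G) (w v : world M) : Prop :=
  (forall p, aw M i w p <-> aw M i v p) /\
  (forall p, aw M i w p -> (val M p w <-> val M p v)).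

(* ~_i ∘ ≈_i  =  {(w,v) | exists t, w ≈_i t /\ t ~_i v} *)
Definition comp_rel (i : G) (w v : world M) : Prop :=
  exists t, aeq i w t /\ sim M i t v.

Definition comp_plus (i : G) : relation (world M) := clos_trans _ (comp_rel i).
End Rel.
Arguments aeq {G M}.
Arguments comp_rel {G M}.
Arguments comp_plus {G M}.

Inductive form (G : Type) : Type :=
  | Atom : prop_atom -> form G
  | Neg : form G -> form G
  | And : form G -> form G -> form G
  | Aw : G -> form G -> form G
  | Inf : G -> form G -> form G
  | Exp : G -> form G -> form G
  | BoxA : G -> form G -> form G
  | BoxC : G -> form G -> form G.

Inductive fform (G : Type) : Type :=
  | FAtom : prop_atom -> fform G
  | FNeg : fform G -> fform G
  | FAnd : fform G -> fform G -> fform G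
  | FAw : G -> fform G -> fform G
  | FInf : G -> fform G -> fform G
  | FExp : G -> fform G -> fform G.

Fixpoint atoms (G : Type) (f : form G) : list prop_atom :=
  match f with
  | Atom p => [p]
  | Neg a => atoms G a
  | And a b => atoms G a ++ atoms G b
  | Aw _ a | Inf _ a | Exp _ a | BoxA _ a | BoxC _ a => atoms G a
  end.

Fixpoint fatoms (G : Type) (f : fform G) : list prop_atom :=
  match f with
  | FAtom p => [p]
  | FNeg a => fatoms G a
  | FAnd a b => fatoms G a ++ fatoms G b
  | FAw _ a | FInf _ a | FExp _ a => fatoms G a
  end.

Arguments Atom {G}. Arguments Neg {G}. Arguments And {G}. Arguments Aw {G}.
Arguments Inf {G}. Arguments Exp {G}. Arguments BoxA {G}. Arguments BoxC {G}.
Arguments FAtom {G}. Arguments FNeg {G}. Arguments FAnd {G}. Arguments FAw {G}.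
Arguments FInf {G}. Arguments FExp {G}.

Fixpoint sat (G : Type) (M : model G) (w : world M) (f : form G) : Prop :=
  match f with
  | Atom p => val M p w
  | Neg a => ~ sat G M w a
  | And a b => sat G M w a /\ sat G M w b
  | Aw i a => forall p, In p (atoms G a) -> aw M i w p
  | Inf i a => forall v, sim M i w v -> sat G M v a
  | Exp i a => (forall p, In p (atoms G a) -> aw M i w p) /\
               (forall v, comp_plus i w v -> sat G M v a)
  | BoxA i a => forall v, aeq i w v -> sat G M v a
  | BoxC i a => forall v, comp_plus i w v -> sat G M v a
  end.

Fixpoint fsat (G : Type) (M : model G) (w : world M) (f : fform G) : Prop :=
  match f with
  | FAtom p => val M p w
  | FNeg a => ~ fsat G M w a
  | FAnd a b => fsat G M w a /\ fsat G M w b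
  | FAw i a => forall p, In p (fatoms G a) -> aw M i w p
  | FInf i a => forall v, sim M i w v -> fsat G M v a
  | FExp i a => (forall p, In p (fatoms G a) -> aw M i w p) /\
                (forall v, sim M i w v -> fsat G M v a)
  end.

Arguments atoms {G}.
Arguments fatoms {G}.
Arguments sat {G} M w f.
Arguments fsat {G} M w f.

(* Main.v *)
Require Import Defs.
From mathcomp Require Import all_boot.
From Stdlib Require Import List Relations.

Fixpoint tr {G : Type} (f : fform G) : form G :=
  match f with
  | FAtom p => Atom p
  | FNeg a => Neg (tr a)
  | FAnd a b => And (tr a) (tr b)
  | FAw i a => Aw i (tr a)
  | FInf i a => Inf i (tr a)
  | FExp i a => And (Aw i (tr a)) (Inf i (tr a))
  end.

Lemma tr_atoms {G : Type} (f : fform G) p : In p (atoms (tr f)) <-> In p (fatoms f).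
Proof.
  induction f; simpl; rewrite ?in_app_iff; try tauto.
Qed.

Lemma tr_ok {G : Type} (M : model G) (f : fform G) :
  forall w, fsat M w f <-> sat M w (tr f).
Proof.
  induction f; intro w; simpl.
  - tauto.
  - rewrite IHf; tauto.
  - rewrite IHf1 IHf2; tauto.
  - split; intros H p Hp; apply H; apply tr_atoms; auto.
  - split; intros H v Hv; apply IHf; auto.
  - split; intros [H1 H2]; split; try (intros p Hp; apply H1; apply tr_atoms; auto);
      intros v Hv; apply IHf; auto.
Qed.

Lemma eq_equiv (T : Type) : equivalence T (@eq T).
Proof. constructor; red; intros; subst; auto. Qed.

Definition M1 (G : Type) : model G :=
  @Model G unit (inhabits tt) (fun _ => @eq unit) (fun _ _ _ => False)
    (fun _ _ => True) (fun _ => eq_equiv unit)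
    (fun _ _ _ _ _ => iff_refl False).

Definition M2 (G : Type) : model G :=
  @Model G bool (inhabits true) (fun _ => @eq bool) (fun _ _ _ => False)
    (fun _ b => b = true) (fun _ => eq_equiv bool)
    (fun _ _ _ _ _ => iff_refl False).

Lemma same {G : Type} (f : fform G) :
  fsat (M2 G) (true : world (M2 G)) f <-> fsat (M1 G) (tt : world (M1 G)) f.
Proof.
  induction f; simpl.
  - tauto.
  - rewrite IHf; tauto.
  - rewrite IHf1 IHf2; tauto.
  - tauto.
  - split; intros H v Hv; subst v; apply IHf; auto.
  - split; intros [H1 H2]; split; auto; intros v Hv; subst v; apply IHf; auto.
Qed.

Theorem theorem1 (G : finType) (hG : inhabited G) :
  (forall phi : fform G, exists psi : form G,
      forall (M : model G) (w : world M), fsat M w phi <-> sat M w psi) /\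
  ~ (forall psi : form G, exists phi : fform G,
      forall (M : model G) (w : world M), sat M w psi <-> fsat M w phi).
Proof.
  split.
  - intro phi; exists (tr phi); intros M w; apply tr_ok.
  - intro H. destruct hG as [i].
    destruct (H (BoxA i (Atom 0))) as [phi Hphi].
    assert (A1 : sat (M1 G) (tt : world (M1 G)) (BoxA i (Atom 0))).
    { simpl; auto. }
    assert (A2 : ~ sat (M2 G) (true : world (M2 G)) (BoxA i (Atom 0))).
    { simpl; intro K.
      assert (E : false = true).
      { apply (K false). split; intro p; cbn; tauto. }
      discriminate. }
    apply A2, Hphi, same, Hphi, A1.
Qed.
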